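(* Let $V$ be a finite dimensional real vector space, let $\mathscr C$ be a collection of cones in $V$ each containing $0$, and let $S$ be a closed convex subset of $V$. If $\mathcal C_S\subseteq\bigcup_{\Gamma\in\mathscr C}\mathcal C_\Gamma$, then $S=\bigcap_{\Gamma\in\mathscr C}(S+\Gamma)$.
   Context: A cone in $V$ is a subset closed under multiplication by positive reals. For $S\subseteq V$, the support function is $H_S:V^*\to\mathbb R\cup\{\pm\infty\}$, $H_S(\lambda)=\sup_{x\in S}\lambda(x)$, and $\mathcal C_S=\{\lambda\in V^*:H_S(\lambda)<\infty\}$. *)

(* Defs.v *)
From HB Require Import structures.
From mathcomp Require Import all_boot all_order all_algebra.
From mathcomp Require Import all_classical all_reals all_analysis.
Set Implicit Arguments. Unset Strict Implicit. Unset Printing Implicit Defensive.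
Import Order.TTheory GRing.Theory Num.Theory.
Import numFieldTopology.Exports numFieldNormedType.Exports.
Local Open Scope classical_set_scope.
Local Open Scope ring_scope.

(* V = 'rV[R]_n, a finite-dimensional real vector space;
   V^* = linear functionals V -> R, i.e. {linear 'rV[R]_n -> R^o}. *)

Definition is_cone (R : realType) (n : nat) (G : set 'rV[R]_n) : Prop :=
  forall (t : R) (x : 'rV[R]_n), 0 < t -> G x -> G (t *: x).

Definition support_fun (R : realType) (n : nat) (S : set 'rV[R]_n)
  (l : {linear 'rV[R]_n -> R^o}) : \bar R :=
  ereal_sup [set (l x)%:E | x in S].

(* C_S = { lambda in V^* | H_S(lambda) < +oo }. *)
Definition support_dom (R : realType) (n : nat) (S : set 'rV[R]_n)
  : set {linear 'rV[R]_n -> R^o} :=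
  [set l | (support_fun S l < +oo)%E].

Definition mink_sum (R : realType) (n : nat) (A B : set 'rV[R]_n) : set 'rV[R]_n :=
  [set x + y | x in A & y in B].

(* Main.v *)
Require Import Defs.
From HB Require Import structures.
From mathcomp Require Import all_boot all_order all_algebra.
From mathcomp Require Import all_classical all_reals all_analysis.
From mathcomp Require Import ring lra.
Import Order.TTheory GRing.Theory Num.Theory.
Import numFieldTopology.Exports numFieldNormedType.Exports.
Local Open Scope classical_set_scope.
Local Open Scope ring_scope.
Local Open Scope convex_scope.

Section S.
Variables (R : realType) (n : nat).
Implicit Types (x y d e : 'rV[R]_n).

Definition dot d y : R := \sum_i d 0 i * y 0 i.

Lemma dot_linear d : linear (dot d : 'rV[R]_n -> R^o).
Proof.
move=> a u v; rewrite /dot /= scaler_sumr -big_split /=; apply: eq_bigr => i _.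
by rewrite !mxE /GRing.scale /=; ring.
Qed.

HB.instance Definition _ d := GRing.isLinear.Build R 'rV[R]_n R^o *:%R (dot d) (dot_linear d).

Lemma dotC d e : dot d e = dot e d.
Proof. by apply: eq_bigr => i _; rewrite mulrC. Qed.

Lemma dot_ge0 d : 0 <= dot d d.
Proof. by apply: sumr_ge0 => i _; rewrite -expr2 sqr_ge0. Qed.

Lemma dot_eq0 d : dot d d = 0 -> d = 0.
Proof.
move=> /eqP; rewrite psumr_eq0; last by move=> i _; rewrite -expr2 sqr_ge0.
move=> /allP H; apply/rowP => i; rewrite mxE.
have := H i (mem_index_enum i); rewrite /= mulf_eq0 orbb => /eqP //.
Qed.

Lemma dot_expand d e (t : R) :
  dot (d - t *: e) (d - t *: e) = dot d d - 2 * t * dot d e + t ^+ 2 * dot e e.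
Proof.
rewrite /dot !mulr_sumr -sumrB -big_split /=; apply: eq_bigr => i _.
by rewrite !mxE; ring.
Qed.

Lemma cont_sum (I : eqType) (r : seq I) (F : I -> 'rV[R]_n -> R) :
  (forall i, continuous (F i)) -> continuous (fun y => \sum_(i <- r) F i y).
Proof.
move=> Fc; elim: r => [|a r IH].
  under eq_fun do rewrite big_nil; exact: cst_continuous.
under eq_fun do rewrite big_cons.
by move=> y; apply: continuousD; [exact: Fc|exact: IH].
Qed.

Lemma g_cont x : continuous (fun y => dot (x - y) (x - y)).
Proof.
apply: cont_sum => i.
have -> : (fun y : 'rV[R]_n => (x - y) 0 i * (x - y) 0 i) =
  ((fun=> x 0 i) - (fun y : 'rV[R]_n => y 0 i)) \* ((fun=> x 0 i) - (fun y : 'rV[R]_n => y 0 i)).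
  by apply: funext => y; rewrite !mxE.
move=> y; apply: continuousM; apply: continuousB;
  (exact: cst_continuous || exact: (@coord_continuous R 1 n 0 i)).
Qed.


Lemma term_le_sum (F : 'I_n -> R) j : (forall i, 0 <= F i) -> F j <= \sum_i F i.
Proof.
move=> F0; rewrite (bigD1 j) //= lerDl; exact: sumr_ge0.
Qed.

Lemma proj (S : set 'rV[R]_n) x s0 : closed S -> convex_set S -> S s0 ->
  exists2 p, S p & forall s, S s -> dot (x - p) (s - p) <= 0.
Proof.
move=> Scl Scv Ss0.
pose g := fun y => dot (x - y) (x - y).
pose c := g s0.
pose A := S `&` [set y | g y <= c].
have Acl : closed A.
  apply: closedI => //.
  exact: (proj1 (continuous_closedP g) (g_cont x) _ (@closed_le R c)).
have Abd : bounded_set A.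
  exists (\sum_i `|x 0 i| + c + 1); split; first exact: num_real.
  move=> M BM y [Sy gy].
  change (mx_norm y <= M); rewrite mx_normrE; apply: bigmax_le.
    apply: le_trans (ltW BM); rewrite addr_ge0 // ?addr_ge0 ?sumr_ge0 //.
    by move=> i _; rewrite -expr2 sqr_ge0.
  move=> [k j] _ /=; rewrite (ord1 k).
  have h1 : (x 0 j - y 0 j) * (x 0 j - y 0 j) <= c.
    apply: le_trans gy; rewrite /g /dot.
    have := @term_le_sum (fun i => (x - y) 0 i * (x - y) 0 i) j.
    rewrite !mxE; apply => i; rewrite -expr2 sqr_ge0 //.
  have h2 : `|x 0 j| <= \sum_i `|x 0 i|.
    by apply: (@term_le_sum (fun i => `|x 0 i|)).
  apply: le_trans (ltW BM).
  have h3 : `|x 0 j - y 0 j| <= c + 1.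
    move: h1; set t := x 0 j - y 0 j => h1.
    by case: (lerP 0 t) => t0; [rewrite ger0_norm // | rewrite ltr0_norm //]; nra.
  have e : y 0 j = x 0 j - (x 0 j - y 0 j) by lra.
  rewrite e; apply: le_trans (ler_normB _ _) _; lra.
have A0 : A !=set0 by exists s0; split => //; rewrite /A /=.
have [p pA pmin] := @EVT_min_rV R n g A A0 (bounded_closed_compact Abd Acl)
  (continuous_subspaceT (g_cont x)).
have pS : S p by move: pA; rewrite inE => -[].
have gmin : forall s, S s -> g p <= g s.
  move=> s Ss; have [gs|gs] := lerP (g s) c.
    by apply: pmin; rewrite inE.
  by move: pA; rewrite inE => -[_ gp]; apply: le_trans gp (ltW gs).
exists p => // s Ss.
rewrite leNgt; apply/negP => de0.
set d := x - p; set e := s - p.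
move: de0; set de := dot d e => de0.
have ee0 : 0 <= dot e e := dot_ge0 e.
set ee := dot e e in ee0.
have dee : 0 < de + ee by lra.
pose t := de / (de + ee).
have t0 : 0 < t by rewrite divr_gt0.
have t1 : t <= 1 by rewrite ler_pdivrMr // mul1r lerDl.
have ht : t * (de + ee) = de by rewrite /t divfK // lt0r_neq0.
have tP : Itv.num_sem `[0%Z, 1%Z] t.
  apply/andP; split; first exact: num_real.
  by rewrite in_itv /= (ltW t0) t1.
pose ti : {i01 R} := @Itv.mk _ _ (Itv.Real `[0%Z, 1%Z]) t tP.
have qS : S ((s : convex_lmodType _) <| ti |> (p : convex_lmodType _)).
  by have := Scv s p ti; rewrite !inE; apply.
have qE : ((s : convex_lmodType _) <| ti |> (p : convex_lmodType _) : 'rV[R]_n) = p + t *: e.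
  rewrite /=.
  by apply/rowP => k; rewrite !mxE /= /unstable.onem; ring.
have := gmin _ qS; rewrite /g qE (_ : x - (p + t *: e) = d - t *: e); last first.
  by rewrite /d opprD addrA.
rewrite dot_expand -/de -/ee -/d => h.
have htd := mulr_gt0 t0 de0.
have htt := mulr_gt0 t0 htd.
move: ht; rewrite mulrDr => ht.
have h2 : t ^+ 2 * ee = t * (t * ee) by rewrite expr2 mulrA.
rewrite h2 in h.
have h3 : t * (t * ee) = t * de - t * (t * de) by rewrite -mulrBr; congr (_ * _); lra.
lra.
Qed.
End S.
Arguments dot {R n}.
Arguments proj {R n S} x {s0}.

Theorem lemma2p24 (R : realType) (n : nat) (CC : set (set 'rV[R]_n))
  (S : set 'rV[R]_n) :
  (forall G, CC G -> is_cone G /\ G 0) ->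
  closed S -> convex_set S ->
  support_dom S `<=` \bigcup_(G in CC) support_dom G ->
  S = \bigcap_(G in CC) mink_sum S G.
Proof.
move=> HC Scl Scv Hsub.
apply/seteqP; split.
  move=> x Sx G CG; exists x => //; exists 0; first exact: (HC G CG).2.
  exact: addr0.
move=> x Hx.
have [//|nSx] := pselect (S x).
exfalso.
have [[s0 Ss0]|S0] := pselect (S !=set0); last first.
  have SE : S = set0.
    by apply/seteqP; split => // y Sy; apply: S0; exists y.
  pose l : {linear 'rV[R]_n -> R^o} := dot 0.
  have : support_dom S l.
    by rewrite /support_dom /support_fun /= SE image_set0 ereal_sup0.
  move=> /Hsub [G CG _].
  have [a Sa _] := Hx G CG.
  by rewrite SE in Sa.
have [p pS pmax] := proj x Scl Scv Ss0.
set d := x - p.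
pose l : {linear 'rV[R]_n -> R^o} := dot d.
have lE y : l y = dot d y by [].
have lS s : S s -> dot d s <= dot d p.
  move=> Ss; have := pmax s Ss.
  by rewrite (linearB (dot d)) /= subr_le0.
have dne : d != 0.
  by apply/eqP => d0; apply: nSx; move/eqP: d0; rewrite subr_eq0 => /eqP ->.
have dd0 : 0 < dot d d.
  by rewrite lt_neqAle dot_ge0 andbT eq_sym; apply/eqP => /dot_eq0 /eqP; apply/negP.
have hx : dot d x = dot d p + dot d d.
  by rewrite {2}/d (linearB (dot d)) /=; lra.
have : support_dom S l.
  rewrite /support_dom /support_fun /=.
  apply: (@le_lt_trans _ _ (dot d p)%:E); last exact: ltry.
  apply: ge_ereal_sup => _ [y Sy <-]; rewrite lee_fin; exact: lS.
move=> /Hsub [G CG lG].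
have [Gcone G0] := HC G CG.
have lG0 z : G z -> dot d z <= 0.
  move=> Gz.
  move: lG; rewrite /support_dom /support_fun /=.
  set sp := ereal_sup _ => lG.
  have ub : forall w, G w -> ((dot d w)%:E <= sp)%E.
    by move=> w Gw; apply: ereal_sup_ubound; exists w.
  have := ub 0 G0; rewrite (linear0 (dot d)).
  case: sp ub lG => [r| |] ub // _ _.
  rewrite leNgt; apply/negP => dz0.
  pose t := (`|r| + 1) / dot d z.
  have t0 : 0 < t by rewrite divr_gt0 // ltr_pwDr // normr_ge0.
  have := ub _ (Gcone t z t0 Gz).
  have -> : dot d (t *: z) = t * dot d z.
    by rewrite /dot mulr_sumr; apply: eq_bigr => i _; rewrite !mxE; ring.
  rewrite lee_fin /t divfK ?lt0r_neq0 //.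
  have := ler_norm r; lra.
have [a Sa [b Gb abx]] := Hx G CG.
have := lS a Sa; have := lG0 b Gb.
have : dot d x = dot d a + dot d b by rewrite -abx (linearD (dot d)).
lra.
Qed.
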